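(* Let $n\ge 3$ be an integer and let $\overline D_n:=\langle a,b\mid aba=bab,\ ab^2a=b^{n-2}\rangle$. Then in $\overline D_n$ the identity $$a^n=(b^{n-4}a^{-1})^n$$ holds. *)

(* Defs.v *)
From HB Require Import structures.
From mathcomp Require Import all_boot monoid.
From mathcomp Require Import ssralg ssrint.
Set Implicit Arguments. Unset Strict Implicit. Unset Printing Implicit Defensive.

Local Open Scope group_scope.

Definition zexpg (G : groupType) (x : G) (z : int) : G :=
  match z with
  | Posz k => x ^+ k
  | Negz k => (x ^+ k.+1)^-1
  end.

Definition Dbar_rel (n : nat) (G : groupType) (a b : G) : Prop :=
  a * b * a = b * a * b /\ a * (b ^+ 2) * a = b ^+ (n - 2).

(* Main.v *)
Require Import Defs.
From HB Require Import structures.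
From mathcomp Require Import all_boot monoid.
From mathcomp Require Import ssralg ssrint.

Local Open Scope group_scope.

Lemma z2 (G : groupType) (b : G) j : zexpg b ((j.+4)%:Z - 4%:Z)%R = b ^+ j.
Proof. have -> : ((j.+4)%:Z - 4%:Z)%R = (j%:Z)%R by rewrite subzn // -addn4 addnK.
 by []. Qed.

Lemma zb (G : groupType) (b : G) k :
  b ^+ 2 * zexpg b ((k.+3)%:Z - 4%:Z)%R = b ^+ k.+1.
Proof.
case: k => [|j].
  by rewrite /= expg1 expg2 mulgK.
by rewrite z2 -expgnDr.
Qed.

Lemma E1 (G : groupType) (a b : G) k : a * b * a = b * a * b ->
  a * b ^+ 2 * a = b ^+ k.+1 -> b * a^+2 * b = a^+k.+1.
Proof.
move=> H1 H2.
have Da : a*b*a*a = b*(a*b*a) by rewrite !mulgA -H1.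
have Db : a*b*a*b = a*(a*b*a) by rewrite [in RHS]H1 !mulgA.
have DbX : forall m, a*b*a * b^+m = a^+m * (a*b*a).
  elim=> [|m IH]; first by rewrite mulg1 mul1g.
  by rewrite expgS mulgA Db -mulgA IH mulgA -expgS.
move: Da DbX; set D := a*b*a => Da DbX.
  apply: (mulIg D).
  rewrite -DbX -H2. symmetry.
  transitivity (D * a * b^+2 * a); first by rewrite !mulgA.
  rewrite Da.
  transitivity (b * (D * b^+2) * a); first by rewrite !mulgA.
  rewrite DbX.
  transitivity (b * a^+2 * (D * a)); first by rewrite !mulgA.
  by rewrite Da mulgA.
Qed.

Theorem mainTheorem5 (n : nat) (Hn : (3 <= n)%N) (G : groupType) (a b : G) :
  Dbar_rel n a b ->
  a ^+ n = (zexpg b (n%:Z - 4%:Z)%R * a^-1) ^+ n.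
Proof.
case: n Hn => [|[|[|k]]] // _ [H1 H2].
rewrite (_ : k.+3 - 2 = k.+1)%N in H2; last by rewrite subSS subSS subn0.
have E := @E1 G a b k H1 H2.
set Z := zexpg b _.
have HZ : b ^+ 2 * Z = b ^+ k.+1 by exact: zb.
have e1 : a ^+ k.+3 = a ^+ 2 * b * a ^+ 2 * b.
  by rewrite (expgnDr a 2 k.+1) -E !mulgA.
have e2 : a ^+ k.+3 = b * a ^+ 2 * b * a ^+ 2.
  by rewrite -(addn2 k.+1) expgnDr -E.
have c : commute (a ^+ k.+3) b.
  rewrite /commute {1}e2 [in RHS]e1 !mulgA; done.
have c2 := commuteX 2 c.
have EZ : Z * a^-1 = a ^ (b ^+ 2).
  apply: (mulgI (b ^+ 2)).
  by rewrite conjgE mulVKg mulgA HZ -H2 mulgK.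
by rewrite EZ -conjXg conjgE c2 mulKg.
Qed.
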